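(* Let $H_1,G_1,H_2,G_2,H_3$ be finite groups and $s_1:G_1\to H_1$, $t_1:G_1\to H_2$, $s_2:G_2\to H_2$, $t_2:G_2\to H_3$ group homomorphisms, viewed as orbifold maps $\bullet/H_1\xleftarrow{s_1}\bullet/G_1\xrightarrow{t_1}\bullet/H_2\xleftarrow{s_2}\bullet/G_2\xrightarrow{t_2}\bullet/H_3$. Let $\bullet/G_1\times_{\bullet/H_2}\bullet/G_2$ be the fiber product, i.e. the action groupoid $(G_1\times G_2)\ltimes H_2$ with action $(g_1,g_2)\cdot h=s_2(g_2)\,h\,t_1(g_1)^{-1}$, equipped with the maps $s_3$ to $\bullet/H_1$ induced by $(g_1,g_2)\mapsto s_1(g_1)$ and $t_3$ to $\bullet/H_3$ induced by $(g_1,g_2)\mapsto t_2(g_2)$. Then, as maps $H^*(\bullet/H_1;\mathbb{R})\to H^*(\bullet/H_3;\mathbb{R})$, $$(t_2)_*\circ s_2^*\circ (t_1)_*\circ s_1^*=(t_3)_*\circ s_3^*.$$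
   Context: For a finite group $K$, $\bullet/K$ denotes the orbifold given by the action groupoid $K\ltimes\{\mathrm{pt}\}$; its de Rham cohomology is $\mathbb{R}$ in degree $0$, and the integral over an orbifold $M/K$ (global quotient) of a $K$-invariant compactly supported form $\omega$ is $\frac{1}{|K|}\int_M\omega$, so $\int_{\bullet/K}1=1/|K|$; integrals over a finite disjoint union of such point orbifolds are sums. Pullback $f^*$ on cohomology is the usual one, and pushforward $f_*$ along a proper map $f:X\to Z$ of compact zero-dimensional orbifolds is defined by $\int_Z f_*(\alpha)\wedge\beta=\int_X\alpha\wedge f^*\beta$. *)

(* Defs.v *)
From HB Require Import structures.
From mathcomp Require Import all_boot all_order all_algebra all_fingroup.
From mathcomp Require Import reals.
From Stdlib Require Import ClassicalEpsilon.
Set Implicit Arguments. Unset Strict Implicit. Unset Printing Implicit Defensive.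
Import GRing.Theory Num.Theory.
Local Open Scope ring_scope.

(* A zero-dimensional orbifold given by an action groupoid K \ltimes M,
   with K a finite group acting (on the left) on a finite set M. *)
Record orb := Orb {
  og : finGroupType;
  osp : finType;
  oact : og -> osp -> osp }.

Definition ptorb (K : finGroupType) : orb := @Orb K unit (fun _ x => x).

(* A map of action groupoids: a group homomorphism together with a map of
   spaces (equivariant in the situations considered). *)
Record omap (X Y : orb) := OMap {
  ohom : og X -> og Y;
  ospmap : osp X -> osp Y }.

Section Forms.
Variable R : realType.

(* Differential forms on a 0-dimensional orbifold are functions on the
   (discrete) space; all are closed and none exact, so de Rham cohomology
   H^*(M/K) = H^0 = K-invariant functions M -> R. *)
Definition is_inv (X : orb) (w : osp X -> R) : Prop :=
  forall (k : og X) (x : osp X), w (oact k x) = w x.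

(* Integral over M/K of an invariant (top-degree = 0-)form: (1/|K|) \int_M w,
   and \int_M over a finite discrete M is the sum. *)
Definition orb_int (X : orb) (w : osp X -> R) : R :=
  (#|og X|%:R)^-1 * \sum_(x : osp X) w x.

Definition pullback (X Y : orb) (f : omap X Y) (b : osp Y -> R) : osp X -> R :=
  fun x => b (ospmap f x).

Definition is_pushforward (X Z : orb) (f : omap X Z) (a : osp X -> R)
    (c : osp Z -> R) : Prop :=
  is_inv c /\
  forall b : osp Z -> R, is_inv b ->
    orb_int (fun z => c z * b z) = orb_int (fun x => a x * pullback f b x).

Definition pushforward (X Z : orb) (f : omap X Z) (a : osp X -> R) : osp Z -> R :=
  epsilon (inhabits (fun _ => 0)) (is_pushforward f a).

End Forms.

Definition ptmap (G H : finGroupType) (s : {morphism [set: G] >-> H}) :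
  omap (ptorb G) (ptorb H) := @OMap (ptorb G) (ptorb H) (fun g => s g) (fun _ => tt).

Definition fibprod (G1 H2 G2 : finGroupType)
    (t1 : {morphism [set: G1] >-> H2}) (s2 : {morphism [set: G2] >-> H2}) : orb :=
  @Orb (G1 * G2)%type H2 (fun g h => (s2 g.2 * h * (t1 g.1)^-1)%g).

Definition fib_s3 (G1 H1 H2 G2 : finGroupType) (s1 : {morphism [set: G1] >-> H1})
    (t1 : {morphism [set: G1] >-> H2}) (s2 : {morphism [set: G2] >-> H2}) :
  omap (fibprod t1 s2) (ptorb H1) :=
  @OMap (fibprod t1 s2) (ptorb H1) (fun g : (G1 * G2)%type => s1 g.1) (fun _ => tt).

Definition fib_t3 (G1 H2 G2 H3 : finGroupType)
    (t1 : {morphism [set: G1] >-> H2}) (s2 : {morphism [set: G2] >-> H2})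
    (t2 : {morphism [set: G2] >-> H3}) :
  omap (fibprod t1 s2) (ptorb H3) :=
  @OMap (fibprod t1 s2) (ptorb H3) (fun g : (G1 * G2)%type => t2 g.2) (fun _ => tt).

(* Main.v *)
Require Import Defs.
From mathcomp Require Import all_boot all_order all_algebra all_fingroup.
From mathcomp Require Import reals.
From mathcomp Require Import ring.
From Stdlib Require Import ClassicalEpsilon FunctionalExtensionality.
Import GRing.Theory Num.Theory.
Local Open Scope ring_scope.

Lemma card_ne0 (R : realType) (G : finGroupType) : (#|G|%:R : R) != 0.
Proof. by rewrite pnatr_eq0 -lt0n; apply/card_gt0P; exists 1%g. Qed.

Lemma big_unit (R : realType) (F : unit -> R) : \sum_(x : unit) F x = F tt.
Proof. by rewrite (bigD1 tt) //= big_pred0 ?addr0 // => -[]. Qed.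

Lemma push_pt (R : realType) (X : orb) (H : finGroupType) (f : Defs.omap X (ptorb H))
  (a : osp X -> R) :
  pushforward f a = fun _ => #|H|%:R / #|og X|%:R * \sum_x a x.
Proof.
have hf : forall x, ospmap f x = tt by move=> x; case: (ospmap f x).
have hex : exists c, is_pushforward f a c.
  exists (fun _ => #|H|%:R / #|og X|%:R * \sum_x a x); split; first by [].
  move=> b _.
  have E : \sum_(x : osp X) (a x * pullback f b x) = (\sum_x a x) * b tt.
    by rewrite big_distrl; apply: eq_bigr => x _; rewrite /pullback hf.
  rewrite /orb_int E big_unit /=.
  have h1 := card_ne0 R H. have h2 := card_ne0 R (og X).
  by rewrite !mulrA mulVf // mul1r -!mulrA.
have [_ Hc] := epsilon_spec (inhabits (fun _ => 0)) _ hex.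
apply: functional_extensionality => -[].
have := Hc (fun _ => 1) (fun _ _ => erefl).
rewrite /orb_int /pullback !big_unit /=.
under eq_bigr => x _ do rewrite mulr1.
rewrite mulr1 => E.
have h1 := card_ne0 R H.
rewrite /pushforward; apply: (mulfI (invr_neq0 h1)).
by rewrite E !mulrA mulVf // mul1r.
Qed.

Theorem proposition2p9 (R : realType) (H1 G1 H2 G2 H3 : finGroupType)
  (s1 : {morphism [set: G1] >-> H1}) (t1 : {morphism [set: G1] >-> H2})
  (s2 : {morphism [set: G2] >-> H2}) (t2 : {morphism [set: G2] >-> H3})
  (a : osp (ptorb H1) -> R) :
  is_inv a ->
  pushforward (ptmap t2) (pullback (ptmap s2)
    (pushforward (ptmap t1) (pullback (ptmap s1) a)))
  = pushforward (fib_t3 t1 s2 t2) (pullback (fib_s3 s1 t1 s2) a).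
Proof.
move=> _.
rewrite !push_pt; apply: functional_extensionality => -[].
rewrite /pullback /= !big_unit sumr_const card_prod.
have h1 := card_ne0 R H2. have h2 := card_ne0 R G1. have h3 := card_ne0 R G2.
rewrite -mulr_natr natrM invfM.
have -> : #|(fun _ : H2 => true)| = #|H2| by apply: eq_card.
rewrite -mulr_natr. ring.
Qed.
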